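(* Assume (A1)–(A3) below, suppose the Wald estimands $\mathrm{Wald}_1,\dots,\mathrm{Wald}_L$ are distinct, and suppose the EGMM pseudo-true value $\beta^*_{EGMM}$ is unique. For any $\omega\in\Delta^{L-1}$ with $\omega\ne\lambda^{EGMM}$, the weighting matrix $W=\Omega_\omega^{-1}$, which achieves the floor $V_{floor}(\omega)=1/(\boldsymbol\gamma'\Omega_\omega^{-1}\boldsymbol\gamma)$, fails to deliver the target weights: $\lambda(\Omega_\omega^{-1})\ne\omega$. Consequently any positive definite $W$ with $\lambda(W)=\omega$ satisfies $V(W;\Omega_\omega)>V_{floor}(\omega)$. The target $\omega=\lambda^{EGMM}$ is the unique target for which the floor is achievable.
   Context: Observe i.i.d. $(Y_i,D_i,\mathbf Z_i)$, $Y_i\in\mathbb R$, $D_i\in\{0,1\}$, $\mathbf Z_i\in\{0,1\}^L$, $L\ge2$; potential outcomes $Y_i(0),Y_i(1)$, compliance type $D_i(\cdot):\{0,1\}^L\to\{0,1\}$, $D_i=D_i(\mathbf Z_i)$, $Y_i=D_iY_i(1)+(1-D_i)Y_i(0)$. $p_\ell=P(Z_{\ell i}=1)$, $\pi_\ell,\rho_\ell$ the differences of $\mathbb E[D_i\mid Z_{\ell i}=z]$, $\mathbb E[Y_i\mid Z_{\ell i}=z]$ between $z=1$ and $0$, $\mathrm{Wald}_\ell=\rho_\ell/\pi_\ell$, $\gamma_\ell=\mathrm{Cov}(D_i,Z_{\ell i})$, $\boldsymbol\gamma=(\gamma_\ell)_\ell$, $\Sigma_Z=\mathrm{Var}(\mathbf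 Z_i)$. $g_i(\beta)$ has entries $(Y_i-\beta D_i)(Z_{\ell i}-p_\ell)$; $\Omega(\beta)=\mathbb E[g_i(\beta)g_i(\beta)']$, taken to be positive definite. $\lambda_\ell(W)=\gamma_\ell[W\boldsymbol\gamma]_\ell/(\boldsymbol\gamma'W\boldsymbol\gamma)$; $\Delta^{L-1}$ the probability simplex in $\mathbb R^L$; $\beta^*(\omega)=\sum_\ell\omega_\ell\mathrm{Wald}_\ell$; $\Omega_\omega=\Omega(\beta^*(\omega))$; $V(W;\Omega)=\boldsymbol\gamma'W\Omega W\boldsymbol\gamma/(\boldsymbol\gamma'W\boldsymbol\gamma)^2$. The EGMM pseudo-true value $\beta^*_{EGMM}$ is a fixed point of $T(\beta)=\sum_\ell\lambda_\ell(\Omega(\beta)^{-1})\mathrm{Wald}_\ell$, and $\lambda^{EGMM}=\lambda(\Omega(\beta^*_{EGMM})^{-1})$. Assumptions: (A1) $(Y_i(0),Y_i(1),D_i(\cdot))$ independent of $\mathbf Z_i$. (A2) $D_i(z)$ nondecreasing in each coordinate for every $i$. (A3) $p_\ell>0$, $\pi_\ell>0$ for all $\ell$; $\Sigma_Z$ positive definite. *)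

(* Defs.v *)
From HB Require Import structures.
From mathcomp Require Import all_boot all_order all_algebra.
From mathcomp Require Import all_classical all_reals all_analysis.
Set Implicit Arguments. Unset Strict Implicit. Unset Printing Implicit Defensive.
Import Order.TTheory GRing.Theory Num.Theory.
Local Open Scope classical_set_scope.
Local Open Scope ring_scope.

(* Instruments z in {0,1}^L, compliance types D(.) : {0,1}^L -> {0,1}. *)
Definition instr (L : nat) := {ffun 'I_L -> bool}.
Definition ctype (L : nat) := {ffun instr L -> bool}.

(* Primitive random elements of the model: potential outcomes, compliance
   type, instruments. Observed D and Y are derived from them. *)
Record ivmodel (T : Type) (R : Type) (L : nat) := IVModel {
  Y0 : T -> R ;
  Y1 : T -> R ;
  Dc : T -> ctype L ;
  Zv : T -> instr L }.

Section defs.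
Context {d : measure_display} {T : measurableType d} {R : realType}
  (P : probability T R) {L : nat} (M : ivmodel T R L).

Definition Ex (X : T -> R) : R := fine ('E_P[X])%E.

Definition bR (b : bool) : R := (b : nat)%:R.

Definition Dobs (w : T) : bool := Dc M w (Zv M w).
Definition Dr (w : T) : R := bR (Dobs w).
Definition Yr (w : T) : R := if Dobs w then Y1 M w else Y0 M w.
Definition Zr (l : 'I_L) (w : T) : R := bR (Zv M w l).

Definition pz (l : 'I_L) : R := Ex (Zr l).

Definition condE (X : T -> R) (l : 'I_L) (z : bool) : R :=
  Ex (fun w => X w * bR (Zv M w l == z)) / Ex (fun w => bR (Zv M w l == z)).

Definition piz (l : 'I_L) : R := condE Dr l true - condE Dr l false.
Definition rhoz (l : 'I_L) : R := condE Yr l true - condE Yr l false.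
Definition Wald (l : 'I_L) : R := rhoz l / piz l.

Definition gam (l : 'I_L) : R := Ex (fun w => Dr w * Zr l w) - Ex Dr * pz l.
Definition gamv : 'cV[R]_L := \col_l gam l.

Definition SigmaZ : 'M[R]_L :=
  \matrix_(i, j) (Ex (fun w => Zr i w * Zr j w) - pz i * pz j).

Definition Omega (beta : R) : 'M[R]_L :=
  \matrix_(i, j) Ex (fun w => (Yr w - beta * Dr w) ^+ 2
                              * (Zr i w - pz i) * (Zr j w - pz j)).

Definition quadg (W : 'M[R]_L) : R := (gamv^T *m W *m gamv) 0 0.

Definition lam (W : 'M[R]_L) (l : 'I_L) : R :=
  gam l * (W *m gamv) l 0 / quadg W.

Definition Vasy (W Om : 'M[R]_L) : R :=
  (gamv^T *m W *m Om *m W *m gamv) 0 0 / (quadg W) ^+ 2.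

Definition betastar (om : 'I_L -> R) : R := \sum_l om l * Wald l.
Definition Omega_w (om : 'I_L -> R) : 'M[R]_L := Omega (betastar om).
Definition Vfloor (om : 'I_L -> R) : R := 1 / quadg (invmx (Omega_w om)).

Definition Tmap (beta : R) : R := \sum_l lam (invmx (Omega beta)) l * Wald l.

End defs.

Definition posdef {R : realType} {n : nat} (A : 'M[R]_n) : Prop :=
  A^T = A /\ forall v : 'cV[R]_n, v != 0 -> 0 < (v^T *m A *m v) 0 0.

Definition simplex {R : realType} {L : nat} (om : 'I_L -> R) : Prop :=
  (forall l, 0 <= om l) /\ \sum_l om l = 1.

(* (A1): (Y(0), Y(1), D(.)) independent of Z: product rule on the events
   {Y0 in A, Y1 in B, D(.) = c} x {Z = z}, A, B Borel (these rectangles form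
   a pi-system generating the sigma-algebra of (Y0,Y1,D(.))). *)
Definition A1_indep {d : measure_display} {T : measurableType d} {R : realType}
  (P : probability T R) {L : nat} (M : ivmodel T R L) : Prop :=
  forall (A B : set R) (c : ctype L) (z : instr L),
    measurable A -> measurable B ->
    P [set w | A (Y0 M w) /\ B (Y1 M w) /\ Dc M w = c /\ Zv M w = z] =
    (P [set w | A (Y0 M w) /\ B (Y1 M w) /\ Dc M w = c]
     * P [set w | Zv M w = z])%E.

Definition A2_monotone {T : Type} {R : Type} {L : nat} (M : ivmodel T R L) : Prop :=
  forall w (z z' : instr L), (forall l, z l ==> z' l) -> Dc M w z ==> Dc M w z'.

Definition A3_relevance {d : measure_display} {T : measurableType d} {R : realType}
  (P : probability T R) {L : nat} (M : ivmodel T R L) : Prop :=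
  (forall l, 0 < pz P M l) /\ (forall l, 0 < piz P M l) /\ posdef (SigmaZ P M).

Definition regular {d : measure_display} {T : measurableType d} {R : realType}
  (P : probability T R) {L : nat} (M : ivmodel T R L) : Prop :=
  measurable_fun setT (Y0 M) /\ measurable_fun setT (Y1 M) /\
  (forall c, measurable [set w | Dc M w = c]) /\
  (forall z, measurable [set w | Zv M w = z]) /\
  P.-integrable setT (fun w => ((Y0 M w) ^+ 2)%:E) /\
  P.-integrable setT (fun w => ((Y1 M w) ^+ 2)%:E).

(* Main.v *)
Require Import Defs.
From HB Require Import structures.
From mathcomp Require Import all_boot all_order all_algebra.
From mathcomp Require Import all_classical all_reals all_analysis.
Require Import Defs.
From mathcomp Require Import ring lra.
Import Order.TTheory GRing.Theory Num.Theory.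
Local Open Scope ring_scope.
Set Implicit Arguments. Unset Strict Implicit.

Section G.
Variable R : realType.
Variable n : nat.
Definition bf (A : 'M[R]_n) (x y : 'cV[R]_n) : R := (x^T *m A *m y) 0 0.

Lemma bfBl A x y z : bf A (x - y) z = bf A x z - bf A y z.
Proof. by rewrite /bf linearB /= !mulmxBl !mxE. Qed.
Lemma bfBr A x y z : bf A z (x - y) = bf A z x - bf A z y.
Proof. by rewrite /bf !mulmxBr !mxE. Qed.
Lemma bfZl A a x z : bf A (a *: x) z = a * bf A x z.
Proof. by rewrite /bf linearZ /= -!scalemxAl !mxE. Qed.
Lemma bfZr A a x z : bf A z (a *: x) = a * bf A z x.
Proof. by rewrite /bf -!scalemxAr !mxE. Qed.
Lemma bf_sym A x y : A^T = A -> bf A x y = bf A y x.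
Proof.
move=> hA; rewrite /bf.
transitivity (((x^T *m A *m y)^T) 0 0); first by rewrite [RHS]mxE.
by rewrite !trmx_mul trmxK hA mulmxA.
Qed.

Lemma posdef_unit (A : 'M[R]_n) : posdef A -> A \in unitmx.
Proof.
case=> _ hpos; rewrite unitmxE unitfE; apply/negP => /det0P [v v0 hv].
have : v^T != 0 by rewrite -(inj_eq (@trmx_inj _ _ _)) trmxK linear0.
move/hpos; rewrite trmxK hv mul0mx mxE ltxx //.
Qed.

Lemma posdef_inv (A : 'M[R]_n) : posdef A -> posdef (invmx A).
Proof.
move=> hA; have hu := posdef_unit hA; case: hA => hs hpos; split.
  by rewrite trmx_inv hs.
move=> v v0.
have w0 : invmx A *m v != 0.
  apply: contra v0 => /eqP h; by rewrite -(mulKVmx hu v) h mulmx0.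
have := hpos _ w0; rewrite trmx_mul trmx_inv hs.
by rewrite -!mulmxA (mulmxA A) mulmxV // mul1mx !mulmxA.
Qed.
End G.
Section M.
Context {d : measure_display} {T : measurableType d} {R : realType}
  (P : probability T R) {L : nat} (M : ivmodel T R L).
Let g := gamv P M.

Lemma quadgE W : quadg P M W = (g^T *m (W *m g)) 0 0.
Proof. by rewrite /quadg mulmxA. Qed.

Lemma floorE (Om : 'M[R]_L) : Om \in unitmx ->
  Vasy P M (invmx Om) Om = 1 / quadg P M (invmx Om).
Proof.
move=> hu; rewrite /Vasy -/g.
rewrite -[g^T *m invmx Om *m Om]mulmxA mulVmx // mulmx1 -/(quadg P M _).
set q := quadg _ _ _; have [->|q0] := eqVneq q 0; first by rewrite !mul0r mul1r invr0.
by rewrite expr2 invfM mulrA mulfV // div1r mul1r.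
Qed.

Lemma lam_scale (W Om : 'M[R]_L) (t : R) : t != 0 ->
  W *m g = t *: (invmx Om *m g) -> lam P M W = lam P M (invmx Om).
Proof.
move=> t0 h; apply: funext => l; rewrite /lam !quadgE -/g h -scalemxAr.
move: (invmx Om *m g) => v; move: (g^T *m v) => s.
rewrite !mxE invfM.
have [->|s0] := eqVneq (s 0 0) 0; first by rewrite !invr0 !mulr0.
by field; rewrite s0 t0.
Qed.

Lemma strict_floor (Om W : 'M[R]_L) (om : 'I_L -> R) : posdef Om -> posdef W ->
  lam P M W = om -> \sum_l om l = 1 -> lam P M (invmx Om) <> om ->
  1 / quadg P M (invmx Om) < Vasy P M W Om.
Proof.
move=> hO hW hl hs hne.
have hu := posdef_unit hO; have hI := posdef_inv hO.
case: (hO) => hOs hOp; case: (hW) => hWs hWp.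
have q0 : quadg P M W != 0.
  apply/eqP => q0.
  have : \sum_l lam P M W l = 0 by apply: big1 => l _; rewrite /lam q0 invr0 mulr0.
  by rewrite hl hs => /eqP; rewrite oner_eq0.
have g0 : g != 0.
  by apply: contra q0 => /eqP h; rewrite /quadg -/g h mulmx0 mxE.
set v := invmx Om *m g; set u := W *m g.
have v0 : v != 0.
  by apply: contra g0 => /eqP h; rewrite -(mulKVmx hu g) -/v h mulmx0.
have hb : quadg P M (invmx Om) = bf Om v v.
  by rewrite /bf /v trmx_mul (proj1 hI) -!mulmxA (mulmxA Om) mulmxV // mul1mx !mulmxA.
have hc : quadg P M W = bf Om u v.
  by rewrite /bf /u /v trmx_mul hWs -!mulmxA (mulmxA Om) mulmxV // mul1mx !mulmxA.
have ha : Vasy P M W Om = bf Om u u / (quadg P M W)^+2.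
  by rewrite /Vasy /bf /u trmx_mul hWs !mulmxA.
have hb0 : 0 < bf Om v v := hOp _ v0.
have c0 : bf Om u v != 0 by rewrite -hc.
suff hcs : (bf Om u v)^+2 < bf Om u u * bf Om v v.
  rewrite ha hb hc.
  have c2 : 0 < (bf Om u v)^+2 by rewrite lt_def sqrf_eq0 c0 sqr_ge0.
  rewrite -subr_gt0.
  have b0 : bf Om v v != 0 by rewrite gt_eqF.
  have -> : bf Om u u / bf Om u v ^+ 2 - 1 / bf Om v v =
     (bf Om u u * bf Om v v - bf Om u v ^+ 2) / (bf Om v v * bf Om u v ^+ 2).
    by field; rewrite b0 c0.
  by apply: divr_gt0; [rewrite subr_gt0 | apply: mulr_gt0].
set x := bf Om v v *: u - bf Om u v *: v.
have [x0|x0] := eqVneq x 0.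
  exfalso; apply: hne; rewrite -hl; symmetry.
  apply: (@lam_scale W Om (bf Om u v / bf Om v v)).
    by rewrite mulf_neq0 // invr_eq0 gt_eqF.
  have e : bf Om v v *: u = bf Om u v *: v by apply/eqP; rewrite -subr_eq0 -/x x0.
  have e' : u = (bf Om u v / bf Om v v) *: v.
    apply: (scalerI (lt0r_neq0 hb0)).
    by rewrite e scalerA mulrCA mulfV ?mulr1 // lt0r_neq0.
  exact: e'.
have := hOp _ x0; rewrite -/(bf Om x x) /x bfBl !bfBr !bfZl !bfZr.
rewrite (@bf_sym _ _ Om v u hOs) => hpos.
nra.
Qed.
End M.

Unset Implicit Arguments.
Theorem proposition8 (d : measure_display) (T : measurableType d) (R : realType)
  (P : probability T R) (L : nat) (M : ivmodel T R L)
  (HL : (2 <= L)%N)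
  (Hreg : regular P M)
  (HA1 : A1_indep P M) (HA2 : A2_monotone M) (HA3 : A3_relevance P M)
  (HOmega : forall beta : R, posdef (Omega P M beta))
  (Hdistinct : injective (Wald P M))
  (bE : R) (HbE : Tmap P M bE = bE)
  (HbEuniq : forall b : R, Tmap P M b = b -> b = bE) :
  let lamE := lam P M (invmx (Omega P M bE)) in
  (forall om : 'I_L -> R, simplex om -> om <> lamE ->
     Vasy P M (invmx (Omega_w P M om)) (Omega_w P M om) = Vfloor P M om /\
     lam P M (invmx (Omega_w P M om)) <> om) /\
  (forall om : 'I_L -> R, simplex om -> om <> lamE ->
     forall W : 'M[R]_L, posdef W -> lam P M W = om ->
       Vfloor P M om < Vasy P M W (Omega_w P M om)) /\
  (forall om : 'I_L -> R, simplex om ->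
     ((exists W : 'M[R]_L, posdef W /\ lam P M W = om /\
         Vasy P M W (Omega_w P M om) = Vfloor P M om) <-> om = lamE)).
Proof.
move=> lamE.
have p1b : forall om, om <> lamE -> lam P M (invmx (Omega_w P M om)) <> om.
  move=> om hne hl; apply: hne.
  have hfix : Tmap P M (betastar P M om) = betastar P M om.
    by rewrite /Tmap; move: hl; rewrite /Omega_w => ->.
  have hb := HbEuniq _ hfix.
  by rewrite /lamE -hb; symmetry; exact: hl.
have floor : forall om, Vasy P M (invmx (Omega_w P M om)) (Omega_w P M om) = Vfloor P M om.
  by move=> om; apply: floorE; apply: posdef_unit; apply: HOmega.
have p2 : forall om, simplex om -> om <> lamE -> forall W : 'M[R]_L, posdef W ->
    lam P M W = om -> Vfloor P M om < Vasy P M W (Omega_w P M om).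
  move=> om [_ hs] hne W hW hl.
  exact: (strict_floor (HOmega _) hW hl hs (p1b om hne)).
split; [|split].
- by move=> om _ hne; split; [exact: floor | exact: p1b].
- exact: p2.
- move=> om hsim; split.
  + case=> W [hW [hl hV]].
    case: (pselect (om = lamE)) => // hne; exfalso.
    by have := p2 om hsim hne W hW hl; rewrite hV ltxx.
  + move=> ->; exists (invmx (Omega_w P M lamE)).
    have hO : Omega_w P M lamE = Omega P M bE.
      by rewrite /Omega_w; congr (Omega P M); exact: HbE.
    split.
      by rewrite hO; apply: posdef_inv; apply: HOmega.
    by split; [rewrite hO | exact: floor].
Qed.
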